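(* Fix an uncountable cardinal $\lambda$. If there is an adequate $\omega_1$-poset, then there are an adequate $\omega$-poset and an adequate $1$-poset.
   Context: For $s=\langle\alpha,\zeta\rangle$ write $\pi(s)=\alpha$, $\rho(s)=\zeta$. An LCS poset is a triple $\mathcal T=\langle T,\preceq,i\rangle$ such that: (1) $\langle T,\preceq\rangle$ is a partial order with $T=\bigcup\{T_\alpha:\alpha<\eta\}$ for a nonzero ordinal $\eta$, each $T_\alpha=\{\alpha\}\times A_\alpha$ with $A_\alpha$ a nonempty set of ordinals; (2) $s\prec t$ implies $\pi(s)<\pi(t)$; (3) if $\alpha<\beta<\eta$ and $t\in T_\beta$ then $\{s\in T_\alpha: s\prec t\}$ is infinite; (4) $i:[T]^2\to[T]^{<\omega}$ with, for all $\{s,t\}$: (a) $v\in i\{s,t\}$ implies $v\preceq s,t$; (b) if $u\preceq s,t$ then $u\preceq v$ for some $v\in i\{s,t\}$. Its cardinal sequence is $\langle|T_\alpha|:\alpha<\eta\rangle$. If $S\subseteq T$ satisfies $i\{s,t\}\subseteq S$ for all $\{s,t\}\in[S]^2$, the restriction $\mathcal T\restriction S$ is $\langle S,\preceq\cap(S\times S), i\restriction[S]^2\rangle$. For a sequence of cardinals $f$, an $f$-skeleton is an LCS poset with $T=\bigcup\{\{\alpha\}\times A_\alpha:\alpha<\eta\}$ and cardinal sequence $f$ such that for each $\alpha<\eta$ there is a countable $O_\alpha\in[A_\alpha]^\omega$ with: $s\prec t$ and $\pi(s)=\alpha$ imply $\rho(s)\in O_\alpha$; (i) if $s,t\in\{\alpha\}\times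 O_\alpha$, $\rho(s)\ne\rho(t)$, then $i\{s,t\}=\emptyset$; (ii) if $\alpha+1<\eta$, $t\in\{\alpha+1\}\times A_{\alpha+1}$ and $s\prec t$, then there is $u\in\{\alpha\}\times O_\alpha$ with $s\preceq u\prec t$. $\langle\kappa\rangle_\alpha$ is the constant sequence of length $\alpha$ with value $\kappa$, and ${}^\frown$ is concatenation. Fix an uncountable cardinal $\lambda$. For an ordinal $\gamma$ let $Y_\gamma = (\gamma\times\omega)\cup(\{\gamma,\gamma+1\}\times\lambda)$, with levels $\{\alpha\}\times\omega$ ($\alpha<\gamma$), $\{\gamma\}\times\lambda$, $\{\gamma+1\}\times\lambda$. Let $\mathbb B^{(\gamma)}_S=\gamma\times\omega$ and, for $\zeta<\lambda$, $\mathbb B^{(\gamma)}_\zeta = \{\gamma\}\times[\omega\cdot\zeta,\omega\cdot\zeta+\omega)\cup\{\langle\gamma+1,\zeta\rangle\}$ (ordinal arithmetic). An adequate $\gamma$-poset is an LCS poset $\langle T,\preceq,i\rangle$ with $T=Y_\gamma$ such that for every $\zeta<\lambda$: (1) if $x\in\mathbb B^{(\gamma)}_\zeta$ with $\pi(x)=\gamma$, then $x\prec\langle\gamma+1,\zeta\rangle$ and $x\not\prec\langle\gamma+1,\xi\rangle$ for all $\xi\ne\zeta$; (2) the restriction of $\mathcal T$ to $\mathbb B^{(\gamma)}_S\cup\mathbb B^{(\gamma)}_\zeta$ is a $\langle\omega\rangle_{\gamma+1}{}^\frown\langle1\rangle$-skeleton. *)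

(* Defs.v *)
From Stdlib Require Import List Arith.
Import ListNotations.
Set Implicit Arguments.

Definition countable_pred (T : Type) (P : T -> Prop) : Prop :=
  exists f : T -> nat, forall x y, P x -> P y -> f x = f y -> x = y.

Definition uncountable_type (T : Type) : Prop :=
  ~ countable_pred (fun _ : T => True).

Definition finite_pred (T : Type) (P : T -> Prop) : Prop :=
  exists l : list T, forall x, P x -> In x l.

Definition countably_infinite_pred (T : Type) (P : T -> Prop) : Prop :=
  exists f : nat -> T,
    (forall n, P (f n)) /\ (forall m n, f m = f n -> m = n) /\
    (forall x, P x -> exists n, f n = x).

Definition singleton_pred (T : Type) (P : T -> Prop) : Prop :=
  exists x, P x /\ forall y, P y -> y = x.

(* (W, ltW) is a well-ordering of order type omega_1: a well-founded strict
   total order which is uncountable, all of whose proper initial segments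
   are countable. *)
Definition is_omega1 (W : Type) (ltW : W -> W -> Prop) : Prop :=
  (forall x, ~ ltW x x) /\
  (forall x y z, ltW x y -> ltW y z -> ltW x z) /\
  (forall x y, ltW x y \/ x = y \/ ltW y x) /\
  well_founded ltW /\
  uncountable_type W /\
  (forall w, countable_pred (fun v => ltW v w)).

Section LCS.
Variables (T H : Type) (ltH : H -> H -> Prop) (pi : T -> H).

Definition strict (le : T -> T -> Prop) (s t : T) : Prop := le s t /\ s <> t.

(* <S, le restricted, i restricted> is an LCS poset whose height is the
   ordinal represented by (H, ltH), with levels { t in S | pi t = alpha }. *)
Definition LCS_on (S : T -> Prop) (le : T -> T -> Prop)
    (i : T -> T -> list T) : Prop :=
  (forall s, S s -> le s s) /\
  (forall s t, S s -> S t -> le s t -> le t s -> s = t) /\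
  (forall s t u, S s -> S t -> S u -> le s t -> le t u -> le s u) /\
  (forall a : H, exists t, S t /\ pi t = a) /\
  (forall s t, S s -> S t -> strict le s t -> ltH (pi s) (pi t)) /\
  (forall a b t, ltH a b -> S t -> pi t = b ->
     ~ finite_pred (fun s => S s /\ pi s = a /\ strict le s t)) /\
  (* (4) i is a function on unordered pairs [S]^2 with values in [S]^<omega *)
  (forall s t, S s -> S t -> s <> t ->
     (forall v, In v (i s t) <-> In v (i t s)) /\
     (forall v, In v (i s t) -> S v) /\
     (forall v, In v (i s t) -> le v s /\ le v t) /\
     (forall u, S u -> le u s -> le u t ->
                  exists v, In v (i s t) /\ le u v)).

(* S is closed under i, so that the restriction to S makes sense *)
Definition i_closed (S : T -> Prop) (i : T -> T -> list T) : Prop :=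
  forall s t, S s -> S t -> s <> t -> forall v, In v (i s t) -> S v.

Definition succH (a b : H) : Prop :=
  ltH a b /\ ~ (exists d, ltH a d /\ ltH d b).

(* The restriction to S is an f-skeleton, where the cardinal sequence f
   is given by the predicate card_ok : H -> (T -> Prop) -> Prop. *)
Definition skeleton_on (card_ok : H -> (T -> Prop) -> Prop)
    (S : T -> Prop) (le : T -> T -> Prop) (i : T -> T -> list T) : Prop :=
  LCS_on S le i /\
  (forall a, card_ok a (fun t => S t /\ pi t = a)) /\
  exists O : H -> T -> Prop,
    (forall a, (forall x, O a x -> S x /\ pi x = a) /\ countable_pred (O a)) /\
    (forall s t, S s -> S t -> strict le s t -> O (pi s) s) /\
    (forall a s t, O a s -> O a t -> s <> t -> i s t = []) /\
    (forall a b s t, succH a b -> S t -> pi t = b -> S s -> strict le s t ->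
       exists u, O a u /\ le s u /\ strict le u t).
End LCS.

(* The ordinal gamma is represented by a strict well-order (G, ltG); the
   height gamma + 2 is represented by hgt G. *)
Inductive hgt (G : Type) : Type :=
  | HLow : G -> hgt G      (* alpha < gamma *)
  | HMid : hgt G           (* gamma *)
  | HTop : hgt G.          (* gamma + 1 *)
Arguments HMid {G}. Arguments HTop {G}.

Definition ltHgt (G : Type) (ltG : G -> G -> Prop) (a b : hgt G) : Prop :=
  match a, b with
  | HLow x, HLow y => ltG x y
  | HLow _, HMid => True
  | HLow _, HTop => True
  | HMid, HTop => True
  | _, _ => False
  end.

(* Lambda is (a type of cardinality) lambda.
   Low a n  = <a, n>            (a < gamma, n < omega)
   Mid z n  = <gamma, omega*z+n> (z < lambda, n < omega); since lambda is an
              infinite cardinal, every ordinal < lambda is uniquely omega*z+n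
   Top z    = <gamma+1, z>      (z < lambda) *)
Inductive Ypt (G Lam : Type) : Type :=
  | Low : G -> nat -> Ypt G Lam
  | Mid : Lam -> nat -> Ypt G Lam
  | Top : Lam -> Ypt G Lam.
Arguments Low {G Lam}. Arguments Mid {G Lam}. Arguments Top {G Lam}.

Definition piY (G Lam : Type) (x : Ypt G Lam) : hgt G :=
  match x with
  | Low a _ => HLow a
  | Mid _ _ => HMid
  | Top _ => HTop
  end.

Definition BSz (G Lam : Type) (z : Lam) (x : Ypt G Lam) : Prop :=
  match x with
  | Low _ _ => True
  | Mid z' _ => z' = z
  | Top z' => z' = z
  end.

Definition card_seq_adequate (G Lam : Type) (a : hgt G)
    (P : Ypt G Lam -> Prop) : Prop :=
  match a with
  | HTop => singleton_pred P
  | _ => countably_infinite_pred P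
  end.

Definition adequate (G : Type) (ltG : G -> G -> Prop) (Lam : Type) : Prop :=
  exists (le : Ypt G Lam -> Ypt G Lam -> Prop)
         (i : Ypt G Lam -> Ypt G Lam -> list (Ypt G Lam)),
    LCS_on (ltHgt ltG) (@piY G Lam) (fun _ => True) le i /\
    forall z : Lam,
      (forall n, strict le (Mid z n) (Top z)) /\
      (forall n xi, xi <> z -> ~ strict le (Mid z n) (Top xi)) /\
      i_closed (BSz z) i /\
      skeleton_on (ltHgt ltG) (@piY G Lam) (@card_seq_adequate G Lam)
        (BSz z) le i.

(* Main.v *)
Require Import Defs.
From Stdlib Require Import Arith Lia List Classical ClassicalEpsilon FunctionalExtensionality PropExtensionality.
From Stdlib Require Cantor FinFun.
Import ListNotations.

Lemma nonfinite (T : Type) (P : T -> Prop) (f : nat -> T) :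
  (forall x y, f x = f y -> x = y) -> (forall x, P (f x)) -> ~ finite_pred P.
Proof.
  intros Hinj HP [L HL].
  assert (Hn : NoDup (map f (seq 0 (S (length L))))).
  { apply FinFun.Injective_map_NoDup; [exact Hinj| apply seq_NoDup]. }
  assert (Hi : incl (map f (seq 0 (S (length L)))) L).
  { intros y Hy. apply in_map_iff in Hy as [x [<- _]]. apply HL, HP. }
  pose proof (NoDup_incl_length Hn Hi) as Hl.
  rewrite length_map, length_seq in Hl. lia.
Qed.

Lemma filter_exists (T : Type) (C : list T) (Q : T -> Prop) :
  exists L, forall v, In v L <-> In v C /\ Q v.
Proof.
  induction C as [|a C [L HL]].
  - exists []. simpl. tauto.
  - destruct (classic (Q a)) as [Ha|Ha].
    + exists (a :: L). intros v. simpl. rewrite HL. split.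
      * intros [<-|H]; tauto.
      * intros [[<-|H] HQ]; tauto.
    + exists L. intros v. simpl. rewrite HL. split.
      * tauto.
      * intros [[<-|H] HQ]; tauto.
Qed.

Definition gen_spec {T} (le : T -> T -> Prop) (s t : T) (L : list T) : Prop :=
  (forall v, In v L -> le v s /\ le v t) /\
  (forall u, le u s -> le u t -> exists v, In v L /\ le u v).

Definition mk_i {T} (le : T -> T -> Prop) (s t : T) : list T :=
  @epsilon (list T) (inhabits []) (gen_spec le s t).

Lemma mk_i_sym {T} (le : T -> T -> Prop) s t : mk_i le s t = mk_i le t s.
Proof.
  unfold mk_i. f_equal. extensionality L. apply propositional_extensionality.
  unfold gen_spec. split; intros [H1 H2]; split.
  - intros v Hv. destruct (H1 v Hv). tauto.
  - intros u Hu Hu'. apply H2; assumption.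
  - intros v Hv. destruct (H1 v Hv). tauto.
  - intros u Hu Hu'. apply H2; assumption.
Qed.

Lemma mk_i_spec {T} (le : T -> T -> Prop) s t :
  (exists L, gen_spec le s t L) -> gen_spec le s t (mk_i le s t).
Proof. intros H. unfold mk_i. apply epsilon_spec. exact H. Qed.

Definition cover {T} (le : T -> T -> Prop) (s t : T) (C : list T) : Prop :=
  forall u, le u s -> le u t -> exists v, In v C /\ le v s /\ le v t /\ le u v.

Lemma cover_gen {T} (le : T -> T -> Prop) s t C : cover le s t C ->
  exists L, gen_spec le s t L.
Proof.
  intros HC. destruct (@filter_exists _ C (fun v => le v s /\ le v t)) as [L HL].
  exists L. split.
  - intros v Hv. apply HL in Hv. tauto.
  - intros u Hu Hu'. destruct (HC u Hu Hu') as [v [Hv [H1 [H2 H3]]]].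
    exists v. split; [apply HL; tauto | exact H3].
Qed.

Lemma mk_i_nil {T} (le : T -> T -> Prop) s t :
  (forall u, le u s -> le u t -> False) -> mk_i le s t = [].
Proof.
  intros H. assert (Hs : gen_spec le s t (mk_i le s t)).
  { apply mk_i_spec. exists []. split; [simpl; tauto|]. intros u Hu Hu'. exfalso; eauto. }
  destruct (mk_i le s t) as [|v L]; [reflexivity|].
  exfalso. destruct Hs as [H1 _]. destruct (H1 v (or_introl eq_refl)). eauto.
Qed.

Lemma cover_sym {T} (le : T -> T -> Prop) s t C : cover le s t C -> cover le t s C.
Proof. intros H u H1 H2. destruct (H u H2 H1) as [v Hv]. exists v. tauto. Qed.

Definition cpair (a b : nat) := Cantor.to_nat (a, b).
Lemma cpair_inj a b c d : cpair a b = cpair c d -> a = c /\ b = d.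
Proof.
  intros H. apply (f_equal Cantor.of_nat) in H. unfold cpair in H.
  rewrite !Cantor.cancel_of_to in H. inversion H. auto.
Qed.

Fixpoint Pc (f : nat -> nat) (m : nat) : nat :=
  match m with 0 => 0 | S m => S (cpair (f m) (Pc f m)) end.

Lemma Pc_inj f g m m' : Pc f m = Pc g m' -> m = m' /\ forall i, i < m -> f i = g i.
Proof.
  revert m'. induction m as [|m IH]; intros [|m'] H; simpl in H; try discriminate.
  - split; [reflexivity| intros; lia].
  - injection H as H. apply cpair_inj in H as [H1 H2]. apply IH in H2 as [-> H2].
    split; [reflexivity|]. intros i Hi. destruct (Nat.eq_dec i m') as [->|]; auto.
    apply H2. lia.
Qed.

Record Frame := {
  FG : Type;
  FlT : FG -> FG -> Prop;
  Fle : FG -> nat -> FG -> nat -> Prop;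
  Flev : nat -> FG;
  Fcode : nat -> nat;
  Firr : forall a, ~ FlT a a;
  Frefl : forall a k, Fle a k a k;
  Fanti : forall a k b l, Fle a k b l -> Fle b l a k -> a = b /\ k = l;
  Ftrans : forall a k b l c m, Fle a k b l -> Fle b l c m -> Fle a k c m;
  Flt : forall a k b l, Fle a k b l -> ~ (a = b /\ k = l) -> FlT a b;
  Ftree : forall c w a k b l, Fle c w a k -> Fle c w b l -> Fle a k b l \/ Fle b l a k;
  Finf : forall a b l, FlT a b -> exists f : nat -> nat,
      (forall x y, f x = f y -> x = y) /\ forall x, Fle a (f x) b l;
  Fkey : forall j e j' e' b l, Fle (Flev j) (Fcode e) b l ->
      Fle (Flev j') (Fcode e') b l -> e = e';
  Fminf : forall a (g : nat -> nat), (forall x y, g x = g y -> x = y) ->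
      exists f : nat -> nat, (forall x y, f x = f y -> x = y) /\
      forall x, exists j, Fle a (f x) (Flev j) (Fcode (g j));
  Fsucc : forall a b, succH FlT a b -> forall c w l, Fle c w b l -> ~ (c = b /\ w = l) ->
      exists k, Fle c w a k /\ Fle a k b l;
  Fsmid : forall a, succH (ltHgt FlT) (HLow a) HMid -> forall b, b = a
}.

Record KeyS (Lam : Type) := {
  Ek : Lam -> nat -> nat -> nat;
  Ek1 : forall z n j z' n' j', Ek z n j = Ek z' n' j' -> n = n' /\ j = j';
  Ek2 : forall z z', z <> z' -> exists d, forall n j n' j',
      Ek z n j = Ek z' n' j' -> n + j <= d
}.
Arguments Ek {Lam}. Arguments Ek1 {Lam}. Arguments Ek2 {Lam}.

Definition inMid (F : Frame) {Lam} (K : KeyS Lam) z n a k : Prop :=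
  exists j, Fle F a k (Flev F j) (Fcode F (Ek K z n j)).

Definition gle (F : Frame) {Lam} (K : KeyS Lam) (x y : Ypt (FG F) Lam) : Prop :=
  match x, y with
  | Low a k, Low b l => Fle F a k b l
  | Low a k, Mid z n => inMid F K z n a k
  | Low a k, Top z => exists n, inMid F K z n a k
  | Mid z n, Mid z' n' => z = z' /\ n = n'
  | Mid z _, Top z' => z = z'
  | Top z, Top z' => z = z'
  | _, _ => False
  end.

Lemma key_common (F : Frame) {Lam} (K : KeyS Lam) z n z' n' a k :
  inMid F K z n a k -> inMid F K z' n' a k ->
  exists j, Ek K z n j = Ek K z' n' j /\ Fle F a k (Flev F j) (Fcode F (Ek K z n j)).
Proof.
  intros [j Hj] [j' Hj'].
  assert (He : Ek K z n j = Ek K z' n' j').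
  { destruct (Ftree F _ _ _ _ _ _ Hj Hj') as [H|H].
    - exact (Fkey F _ _ _ _ _ _ H (Frefl F _ _)).
    - exact (Fkey F _ _ _ _ _ _ (Frefl F _ _) H). }
  pose proof (Ek1 K _ _ _ _ _ _ He) as [_ <-]. exists j. auto.
Qed.

Lemma inMid_down (F : Frame) {Lam} (K : KeyS Lam) z n a k c w :
  Fle F c w a k -> inMid F K z n a k -> inMid F K z n c w.
Proof. intros H [j Hj]. exists j. eapply Ftrans; eauto. Qed.

Lemma gle_refl (F : Frame) {Lam} (K : KeyS Lam) x : gle F K x x.
Proof. destruct x; simpl; auto using Frefl. Qed.

Lemma gle_trans (F : Frame) {Lam} (K : KeyS Lam) x y w :
  gle F K x y -> gle F K y w -> gle F K x w.
Proof.
  destruct x, y, w; simpl; intros H1 H2; try contradiction;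
  repeat match goal with H : _ /\ _ |- _ => destruct H end; subst; auto.
  - eapply Ftrans; eauto.
  - eapply inMid_down; eauto.
  - destruct H2 as [m Hm]. exists m. eapply inMid_down; eauto.
  - eexists; eauto.
Qed.

Lemma gle_anti (F : Frame) {Lam} (K : KeyS Lam) x y :
  gle F K x y -> gle F K y x -> x = y.
Proof.
  destruct x, y; simpl; intros H1 H2; try contradiction;
  repeat match goal with H : _ /\ _ |- _ => destruct H end; subst; auto.
  destruct (Fanti F _ _ _ _ H1 H2); subst; auto.
Qed.

Lemma gle_strict (F : Frame) {Lam} (K : KeyS Lam) x y :
  strict (gle F K) x y -> ltHgt (FlT F) (piY x) (piY y).
Proof.
  unfold strict. destruct x, y; simpl; intros [H1 H2]; try contradiction;
  repeat match goal with H : _ /\ _ |- _ => destruct H end; subst; auto.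
  - apply (Flt F _ _ _ _ H1). intros [-> ->]. auto.
Qed.

Definition dclosed (F : Frame) {Lam} (K : KeyS Lam) (S : Ypt (FG F) Lam -> Prop) :=
  forall s t, S t -> gle F K s t -> S s.

Lemma BSz_dclosed (F : Frame) {Lam} (K : KeyS Lam) z : dclosed F K (BSz z).
Proof.
  intros s t Ht H. destruct s, t; simpl in *; try contradiction; auto;
  repeat match goal with H : _ /\ _ |- _ => destruct H end; subst; auto.
Qed.

Lemma Mid_family (F : Frame) {Lam} (K : KeyS Lam) z n a :
  exists f : nat -> nat, (forall x y, f x = f y -> x = y) /\ forall x, inMid F K z n a (f x).
Proof.
  destruct (Fminf F a (Ek K z n)) as [f [Hf1 Hf2]].
  - intros x y H. apply (Ek1 K) in H. tauto.
  - exists f. split; auto.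
Qed.

Lemma lcs3 (F : Frame) {Lam} (K : KeyS Lam) (S : Ypt (FG F) Lam -> Prop) :
  dclosed F K S ->
  forall a b t, ltHgt (FlT F) a b -> S t -> piY t = b ->
     ~ finite_pred (fun s => S s /\ piY s = a /\ strict (gle F K) s t).
Proof.
  intros HS a b t Hab Ht Hb.
  destruct t as [b' l|z n|z]; simpl in Hb; subst b.
  - destruct a as [a'| |]; simpl in Hab; try contradiction.
    destruct (Finf F _ _ l Hab) as [f [Hf1 Hf2]].
    apply (@nonfinite _ _ (fun x => @Low _ Lam a' (f x))).
    + intros x y H. injection H. auto.
    + intros x. assert (Hle : gle F K (Low a' (f x)) (Low b' l)) by exact (Hf2 x).
      split; [eapply HS; eauto|]. split; [reflexivity|]. split; [exact Hle|].
      intros H. injection H as <- _. eapply Firr; eauto.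
  - destruct a as [a'| |]; simpl in Hab; try contradiction.
    destruct (Mid_family F K z n a') as [f [Hf1 Hf2]].
    apply (@nonfinite _ _ (fun x => @Low _ Lam a' (f x))).
    + intros x y H. injection H. auto.
    + intros x. assert (Hle : gle F K (Low a' (f x)) (Mid z n)) by exact (Hf2 x).
      split; [eapply HS; eauto|]. split; [reflexivity|]. split; [exact Hle| discriminate].
  - destruct a as [a'| |]; simpl in Hab; try contradiction.
    + destruct (Mid_family F K z 0 a') as [f [Hf1 Hf2]].
      apply (@nonfinite _ _ (fun x => @Low _ Lam a' (f x))).
      * intros x y H. injection H. auto.
      * intros x. assert (Hle : gle F K (Low a' (f x)) (Top z)) by (exists 0; exact (Hf2 x)).
        split; [eapply HS; eauto|]. split; [reflexivity|]. split; [exact Hle| discriminate].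
    + apply (@nonfinite _ _ (fun x => @Mid (FG F) Lam z x)).
      * intros x y H. injection H. auto.
      * intros x. assert (Hle : gle F K (Mid z x) (Top z)) by reflexivity.
        split; [eapply HS; eauto|]. split; [reflexivity|]. split; [exact Hle| discriminate].
Qed.

Definition nodeL (F : Frame) {Lam} (K : KeyS Lam) z n j : Ypt (FG F) Lam :=
  Low (Flev F j) (Fcode F (Ek K z n j)).

Definition grid (F : Frame) {Lam} (K : KeyS Lam) z d : list (Ypt (FG F) Lam) :=
  flat_map (fun n => map (fun j => nodeL F K z n j) (seq 0 (S d))) (seq 0 (S d)).

Lemma in_grid (F : Frame) {Lam} (K : KeyS Lam) z d n j :
  n <= d -> j <= d -> In (nodeL F K z n j) (grid F K z d).
Proof.
  intros Hn Hj. unfold grid. apply in_flat_map. exists n. split.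
  - apply in_seq. lia.
  - apply in_map. apply in_seq. lia.
Qed.

Lemma low_common (F : Frame) {Lam} (K : KeyS Lam) z z' : z <> z' ->
  exists d, forall a k n n', inMid F K z n a k -> inMid F K z' n' a k ->
  exists v, In v (grid F K z d) /\ gle F K v (Mid z n) /\ gle F K v (Mid z' n') /\
            gle F K (Low a k) v.
Proof.
  intros Hz. destruct (Ek2 K z z' Hz) as [d Hd]. exists d.
  intros a k n n' H1 H2. destruct (key_common F K _ _ _ _ _ _ H1 H2) as [j [He Hj]].
  pose proof (Hd _ _ _ _ He). exists (nodeL F K z n j). split; [apply in_grid; lia|].
  split; [exists j; apply Frefl|]. split; [exists j; rewrite He; apply Frefl|]. exact Hj.
Qed.

Ltac dsplit := repeat match goal with H : _ /\ _ |- _ => destruct H end.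

Lemma cov_LL (F : Frame) {Lam} (K : KeyS Lam) a k b l :
  exists C, cover (gle F K) (@Low _ Lam a k) (Low b l) C.
Proof.
  exists [Low a k; Low b l]. intros u H1 H2. destruct u as [c w| |]; simpl in *; try contradiction.
  destruct (Ftree F _ _ _ _ _ _ H1 H2) as [H|H].
  - exists (Low a k). simpl. split; [tauto|]. split; [apply Frefl|]. auto.
  - exists (Low b l). simpl. split; [tauto|]. split; [auto|]. split; [apply Frefl|]. auto.
Qed.

Lemma cov_LM (F : Frame) {Lam} (K : KeyS Lam) a k z n :
  exists C, cover (gle F K) (@Low _ Lam a k) (Mid z n) C.
Proof.
  destruct (classic (exists j, Fle F (Flev F j) (Fcode F (Ek K z n j)) a k)) as [[j0 Hj0]|Hno].
  - exists [Low a k; nodeL F K z n j0]. intros u H1 H2.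
    destruct u as [c w| |]; simpl in *; try contradiction. destruct H2 as [j Hj].
    destruct (Ftree F _ _ _ _ _ _ H1 Hj) as [H|H].
    + exists (Low a k). simpl. split; [tauto|]. split; [apply Frefl|]. split; [exists j; auto|]. auto.
    + pose proof (Fkey F _ _ _ _ _ _ H Hj0) as He. apply (Ek1 K) in He as [_ <-].
      exists (nodeL F K z n j). simpl. split; [tauto|]. split; [auto|].
      split; [exists j; apply Frefl|]. auto.
  - exists [Low a k]. intros u H1 H2.
    destruct u as [c w| |]; simpl in *; try contradiction. destruct H2 as [j Hj].
    destruct (Ftree F _ _ _ _ _ _ H1 Hj) as [H|H].
    + exists (Low a k). simpl. split; [tauto|]. split; [apply Frefl|]. split; [exists j; auto|]. auto.
    + exfalso. eauto.
Qed.

Lemma cov_LT (F : Frame) {Lam} (K : KeyS Lam) a k z :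
  exists C, cover (gle F K) (@Low _ Lam a k) (Top z) C.
Proof.
  destruct (classic (exists n j, Fle F (Flev F j) (Fcode F (Ek K z n j)) a k)) as [[n0 [j0 Hj0]]|Hno].
  - exists [Low a k; nodeL F K z n0 j0]. intros u H1 H2.
    destruct u as [c w| |]; simpl in *; try contradiction. destruct H2 as [n [j Hj]].
    destruct (Ftree F _ _ _ _ _ _ H1 Hj) as [H|H].
    + exists (Low a k). simpl. split; [tauto|]. split; [apply Frefl|].
      split; [exists n, j; auto|]. auto.
    + pose proof (Fkey F _ _ _ _ _ _ H Hj0) as He. apply (Ek1 K) in He as [<- <-].
      exists (nodeL F K z n j). simpl. split; [tauto|]. split; [auto|].
      split; [exists n, j; apply Frefl|]. auto.
  - exists [Low a k]. intros u H1 H2.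
    destruct u as [c w| |]; simpl in *; try contradiction. destruct H2 as [n [j Hj]].
    destruct (Ftree F _ _ _ _ _ _ H1 Hj) as [H|H].
    + exists (Low a k). simpl. split; [tauto|]. split; [apply Frefl|].
      split; [exists n, j; auto|]. auto.
    + exfalso. eauto.
Qed.

Lemma cov_MM (F : Frame) {Lam} (K : KeyS Lam) z n z' n' :
  @Mid (FG F) Lam z n <> Mid z' n' -> exists C, cover (gle F K) (Mid z n) (Mid z' n') C.
Proof.
  intros Hne. destruct (classic (z = z')) as [<-|Hz].
  - exists []. intros u H1 H2. exfalso.
    destruct u as [c w|z1 n1|]; simpl in *; try contradiction.
    + destruct (key_common F K _ _ _ _ _ _ H1 H2) as [j [He _]].
      apply (Ek1 K) in He as [<- _]. auto.
    + dsplit; subst. auto.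
  - destruct (low_common F K _ _ Hz) as [d Hd]. exists (grid F K z d).
    intros u H1 H2. destruct u as [c w|z1 n1|]; simpl in *; try contradiction.
    + apply Hd; auto.
    + dsplit; subst. tauto.
Qed.

Lemma cov_MT (F : Frame) {Lam} (K : KeyS Lam) z n z' :
  exists C, cover (gle F K) (@Mid (FG F) Lam z n) (Top z') C.
Proof.
  destruct (classic (z = z')) as [<-|Hz].
  - exists [Mid z n]. intros u H1 H2. exists (Mid z n). simpl. split; [tauto|].
    split; [auto|]. split; [reflexivity|]. exact H1.
  - destruct (low_common F K _ _ Hz) as [d Hd]. exists (grid F K z d).
    intros u H1 H2. destruct u as [c w|z1 n1|]; simpl in *; try contradiction.
    + destruct H2 as [m Hm]. destruct (Hd _ _ _ _ H1 Hm) as [v [Hv [Hv1 [Hv2 Hv3]]]].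
      exists v. split; auto. split; auto. split; auto.
      eapply gle_trans; [exact Hv2|]. reflexivity.
    + dsplit; subst. tauto.
Qed.

Lemma cov_TT (F : Frame) {Lam} (K : KeyS Lam) z z' :
  @Top (FG F) Lam z <> Top z' -> exists C, cover (gle F K) (Top z) (Top z') C.
Proof.
  intros Hne. assert (Hz : z <> z') by (intros ->; auto).
  destruct (low_common F K _ _ Hz) as [d Hd]. exists (grid F K z d).
  intros u H1 H2. destruct u as [c w|z1 n1|]; simpl in *; try contradiction.
  - destruct H1 as [n Hn]. destruct H2 as [m Hm].
    destruct (Hd _ _ _ _ Hn Hm) as [v [Hv [Hv1 [Hv2 Hv3]]]].
    exists v. split; auto. split; [eapply gle_trans; [exact Hv1| reflexivity]|].
    split; [eapply gle_trans; [exact Hv2| reflexivity]|]. auto.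
  - subst. tauto.
  - subst. tauto.
Qed.

Lemma exists_gen (F : Frame) {Lam} (K : KeyS Lam) (s t : Ypt (FG F) Lam) :
  s <> t -> exists L, gen_spec (gle F K) s t L.
Proof.
  intros Hne. cut (exists C, cover (gle F K) s t C).
  { intros [C HC]. exact (cover_gen _ _ _ _ HC). }
  destruct s as [a k|z n|z], t as [b l|z' n'|z'].
  - apply cov_LL.
  - apply cov_LM.
  - apply cov_LT.
  - destruct (cov_LM F K b l z n) as [C HC]. exists C. apply cover_sym, HC.
  - apply cov_MM; auto.
  - apply cov_MT.
  - destruct (cov_LT F K b l z) as [C HC]. exists C. apply cover_sym, HC.
  - destruct (cov_MT F K z' n' z) as [C HC]. exists C. apply cover_sym, HC.
  - apply cov_TT; auto.
Qed.


Lemma lcs_S (F : Frame) {Lam} (K : KeyS Lam) (S : Ypt (FG F) Lam -> Prop) :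
  dclosed F K S -> (forall a, exists t, S t /\ piY t = a) ->
  LCS_on (ltHgt (FlT F)) (@piY (FG F) Lam) S (gle F K) (mk_i (gle F K)).
Proof.
  intros HS Hlev. unfold LCS_on.
  split; [intros; apply (gle_refl F K)|].
  split; [intros; eapply (gle_anti F K); eauto|].
  split; [intros; eapply (gle_trans F K); eauto|].
  split; [exact Hlev|].
  split; [intros; apply (gle_strict F K); auto|].
  split; [exact (lcs3 F K S HS)|].
  intros s t Hs Ht Hne.
  pose proof (mk_i_spec _ _ _ (exists_gen F K s t Hne)) as [Hsp1 Hsp2].
  split; [intros v; rewrite mk_i_sym; tauto|].
  split; [intros v Hv; destruct (Hsp1 v Hv); eapply HS; eauto|].
  split; [exact Hsp1|].
  intros u _ H1 H2. apply Hsp2; auto.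
Qed.

Definition ycode {G Lam} (x : Ypt G Lam) : nat :=
  match x with Low _ k => k | Mid _ n => n | Top _ => 0 end.

Lemma gen_adequate (F : Frame) {Lam} (K : KeyS Lam) (z0 : Lam) :
  adequate (FlT F) Lam.
Proof.
  exists (gle F K), (mk_i (gle F K)). split.
  { apply lcs_S.
    - intros s t _ _. exact I.
    - intros [a| |].
      + exists (Low a 0). auto.
      + exists (Mid z0 0). auto.
      + exists (Top z0). auto. }
  intros z.
  split; [intros n; split; [reflexivity| discriminate]|].
  split; [intros n xi Hxi [H _]; simpl in H; auto|].
  split.
  { intros s t Hs Ht Hne v Hv.
    pose proof (mk_i_spec _ _ _ (exists_gen F K s t Hne)) as [Hsp1 _].
    destruct (Hsp1 v Hv). eapply BSz_dclosed; eauto. }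
  unfold skeleton_on. split.
  { apply lcs_S.
    - apply BSz_dclosed.
    - intros [a| |].
      + exists (Low a 0). simpl. auto.
      + exists (Mid z 0). simpl. auto.
      + exists (Top z). simpl. auto. }
  split.
  { intros [a| |]; simpl.
    - exists (fun k => Low a k). split; [simpl; auto|]. split.
      + intros m n' H. injection H. auto.
      + intros [c k| |] [H1 H2]; simpl in H2; try discriminate. injection H2 as ->. eauto.
    - exists (fun k => Mid z k). split; [simpl; auto|]. split.
      + intros m n' H. injection H. auto.
      + intros [| zz k|] [H1 H2]; simpl in *; try discriminate. subst. eauto.
    - exists (Top z). split; [simpl; auto|].
      intros [| |zz] [H1 H2]; simpl in *; try discriminate. subst. auto. }
  exists (fun a x => BSz z x /\ piY x = a).
  split.
  { intros a. split; [auto|]. exists ycode.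
    intros x y [Hx1 Hx2] [Hy1 Hy2] He.
    destruct x, y; simpl in *; subst; try discriminate; auto;
    try (injection Hx2; intros; subst; auto); try (injection Hy2; intros; subst; auto). }
  split; [intros s t Hs Ht _; auto|].
  split.
  { intros a s t [Hs1 Hs2] [Ht1 Ht2] Hne. apply mk_i_nil. intros u H1 H2.
    destruct s as [c k|z1 n1|z1], t as [c' k'|z2 n2|z2]; simpl in *; subst; try discriminate.
    - injection Ht2; intros; subst. destruct u as [e w| |]; simpl in *; try contradiction.
      destruct (Ftree F _ _ _ _ _ _ H1 H2) as [H|H].
      + eapply (Firr F). apply (Flt F _ _ _ _ H). intros [_ ->]. auto.
      + eapply (Firr F). apply (Flt F _ _ _ _ H). intros [_ ->]. auto.
    - destruct u as [e w|z3 n3|]; simpl in *; try contradiction.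
      + destruct (key_common F K _ _ _ _ _ _ H1 H2) as [j [He _]].
        apply (Ek1 K) in He as [<- _]. auto.
      + dsplit; subst. auto.
    - auto. }
  intros a b s t Hsucc Ht Hb Hs [Hst Hne].
  destruct t as [b' l|z2 n2|z2]; simpl in Hb; subst b.
  - destruct Hsucc as [Hab Hno].
    destruct a as [a'| |]; simpl in Hab; try contradiction.
    assert (Hsc : succH (FlT F) a' b').
    { split; auto. intros [d [H1 H2]]. apply Hno. exists (HLow d). simpl. auto. }
    destruct s as [c w| |]; simpl in Hst; try contradiction.
    destruct (Fsucc F _ _ Hsc c w l Hst) as [k [Hk1 Hk2]].
    { intros [-> ->]. auto. }
    exists (Low a' k). simpl. split; [auto|]. split; [auto|]. split; [auto|].
    intros H. injection H as -> _. eapply Firr; eauto.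
  - destruct a as [a'| |].
    + pose proof (Fsmid F a' Hsucc) as Hall.
      destruct s as [c w| |]; simpl in Hst; try contradiction.
      rewrite (Hall c) in *. exists (Low a' w). simpl. split; [auto|].
      split; [apply (Frefl F)|]. split; [exact Hst| exact Hne].
      dsplit; subst. exfalso; auto.
    + destruct Hsucc as [H _]. contradiction.
    + destruct Hsucc as [H _]. contradiction.
  - destruct a as [a'| |].
    + destruct Hsucc as [_ Hno]. exfalso. apply Hno. exists HMid. simpl. auto.
    + destruct s as [c w|z3 n3|]; simpl in Hst; try contradiction.
      * destruct Hst as [n Hn]. simpl in Ht. subst z2.
        exists (Mid z n). simpl. split; [auto|]. split; [exact Hn|].
        split; [reflexivity|discriminate].
      * destruct Hst. exists (Mid z3 n3). simpl. split; [auto|].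
        split; [split; reflexivity|]. split; [reflexivity|discriminate].
      * exfalso; apply Hne; subst; reflexivity.
    + destruct Hsucc as [H _]. contradiction.
Qed.

Definition tag (k : nat) := fst (Cantor.of_nat k).
Definition pr (k : nat) := cpair (tag k) (snd (Cantor.of_nat (snd (Cantor.of_nat k)))).
Definition ch (x c : nat) := cpair (tag c) (cpair x (snd (Cantor.of_nat c))).

Lemma of_cpair a b : Cantor.of_nat (cpair a b) = (a, b).
Proof. unfold cpair. apply Cantor.cancel_of_to. Qed.

Lemma pr_ch x c : pr (ch x c) = c.
Proof.
  unfold pr, ch, tag. rewrite !of_cpair. cbn [fst snd]. rewrite of_cpair. cbn [fst snd].
  unfold cpair. rewrite <- surjective_pairing. apply Cantor.cancel_to_of.
Qed.

Lemma ch_inj x y c : ch x c = ch y c -> x = y.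
Proof. unfold ch. intros H. apply cpair_inj in H as [_ H]. apply cpair_inj in H. tauto. Qed.

Lemma tag_pr k : tag (pr k) = tag k.
Proof. unfold pr at 1. unfold tag at 1. rewrite of_cpair. reflexivity. Qed.

Lemma tag_iter n k : tag (Nat.iter n pr k) = tag k.
Proof. induction n; simpl; [reflexivity|]. rewrite tag_pr. exact IHn. Qed.

Lemma iter_pr_ch n c : Nat.iter n pr (Nat.iter n (ch 0) c) = c.
Proof.
  revert c. induction n; intros c; [reflexivity|].
  rewrite Nat.iter_succ_r. simpl Nat.iter at 2. rewrite pr_ch. auto.
Qed.

Definition ole (a k b l : nat) : Prop := a <= b /\ Nat.iter (b - a) pr k = l.

Lemma ole_split a b c w : c <= a -> a <= b ->
  Nat.iter (b - c) pr w = Nat.iter (b - a) pr (Nat.iter (a - c) pr w).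
Proof. intros H1 H2. rewrite <- Nat.iter_add. f_equal. lia. Qed.

Definition omegaF : Frame.
Proof.
  refine {| FG := nat; FlT := Nat.lt; Fle := ole; Flev := fun j => j;
            Fcode := fun e => cpair (S e) 0 |}.
  - intros a. apply Nat.lt_irrefl.
  - intros a k. split; [lia|]. rewrite Nat.sub_diag. reflexivity.
  - intros a k b l [H1 H2] [H3 H4]. assert (a = b) by lia. subst b.
    rewrite Nat.sub_diag in H2. auto.
  - intros a k b l c m [H1 H2] [H3 H4]. split; [lia|].
    rewrite (ole_split b c a k H1 H3). congruence.
  - intros a k b l [H1 H2] Hne. destruct (Nat.eq_dec a b) as [->|]; [|lia].
    rewrite Nat.sub_diag in H2. exfalso. auto.
  - intros c w a k b l [H1 H2] [H3 H4]. destruct (Nat.le_ge_cases a b) as [Hab|Hab].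
    + left. split; auto. rewrite <- H4, <- H2. symmetry. apply ole_split; auto.
    + right. split; auto. rewrite <- H4, <- H2. symmetry. apply ole_split; auto.
  - intros a b l Hab. exists (fun x => ch x (Nat.iter (b - a - 1) (ch 0) l)). split.
    + intros x y H. eapply ch_inj; eauto.
    + intros x. split; [lia|]. remember (b - a - 1) as d eqn:Ed.
      assert (Hd : b - a = S d) by lia. rewrite Hd.
      rewrite Nat.iter_succ_r, pr_ch. apply iter_pr_ch.
  - intros j e j' e' b l [H1 H2] [H3 H4].
    assert (Ht : tag l = tag l) by reflexivity.
    rewrite <- H2 in Ht at 1. rewrite <- H4 in Ht. rewrite !tag_iter in Ht.
    unfold tag in Ht. rewrite !of_cpair in Ht. simpl in Ht. congruence.
  - intros a g _. exists (fun x => ch x (cpair (S (g (S a))) 0)). split.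
    + intros x y H. eapply ch_inj; eauto.
    + intros x. exists (S a). split; [lia|]. replace (S a - a) with 1 by lia.
      simpl. apply pr_ch.
  - intros a b [Hab Hno] c w l Hle Hne.
    assert (Hb : b = S a).
    { destruct (Nat.eq_dec b (S a)); auto. exfalso. apply Hno. exists (S a). lia. }
    subst b. destruct Hle as [H1 H2].
    assert (Hc : c <= a).
    { destruct (Nat.eq_dec c (S a)) as [->|]; [|lia]. rewrite Nat.sub_diag in H2. exfalso; auto. }
    exists (Nat.iter (a - c) pr w). split; [split; auto|].
    split; [lia|]. rewrite <- H2. symmetry. apply ole_split; lia.
  - intros a [_ Hno] b. exfalso. apply Hno. exists (HLow (S a)). simpl. lia.
Defined.

Definition unitF : Frame.
Proof.
  refine {| FG := unit; FlT := fun _ _ => False; Fle := fun _ k _ l => k = l;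
            Flev := fun _ => tt; Fcode := fun e => e |}.
  - auto.
  - reflexivity.
  - intros [] k [] l H _. auto.
  - intros. congruence.
  - intros [] k [] l H Hne. apply Hne. auto.
  - intros. left. congruence.
  - intros _ _ _ [].
  - intros. congruence.
  - intros a g Hg. exists g. split; auto. intros x. exists x. reflexivity.
  - intros a b [[] _].
  - intros [] _ []. reflexivity.
Defined.

Definition Ekc {Lam} (chi : Lam -> nat -> nat) z n j := cpair n (Pc (chi z) (n + j)).

Definition mkKey {Lam} (chi : Lam -> nat -> nat)
  (Hchi : forall z z', z <> z' -> exists i, chi z i <> chi z' i) : KeyS Lam.
Proof.
  refine {| Ek := Ekc chi |}.
  - intros z n j z' n' j' H. unfold Ekc in H. apply cpair_inj in H as [-> H].
    apply Pc_inj in H as [H _]. split; auto; lia.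
  - intros z z' Hz. destruct (Hchi z z' Hz) as [i Hi]. exists i.
    intros n j n' j' H. unfold Ekc in H. apply cpair_inj in H as [-> H].
    apply Pc_inj in H as [_ H]. destruct (Nat.le_gt_cases (n' + j) i); auto.
    exfalso. apply Hi. apply H. auto.
Defined.

Lemma list_bound {T} (F : list T) (R : T -> nat -> Prop) :
  (forall v, In v F -> exists n, R v n) ->
  exists N, forall v, In v F -> exists n, n < N /\ R v n.
Proof.
  induction F as [|a F IH]; intros H.
  - exists 0. simpl. tauto.
  - destruct IH as [N HN]. { intros v Hv. apply H. simpl. auto. }
    destruct (H a (or_introl eq_refl)) as [na Ha].
    exists (S (N + na)). intros v [<-|Hv].
    + exists na. split; [lia|auto].
    + destruct (HN v Hv) as [n [Hn Hr]]. exists n. split; [lia|auto].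
Qed.

Lemma inhabited_of_uncountable (T : Type) : uncountable_type T -> inhabited T.
Proof.
  intros H. apply NNPP. intros Hn. apply H. exists (fun _ => 0).
  intros x. exfalso. apply Hn. constructor. exact x.
Qed.

Theorem proposition3p5 (Lam : Type) (HLam : uncountable_type Lam)
    (W : Type) (ltW : W -> W -> Prop) (HW : is_omega1 ltW) :
  adequate ltW Lam ->
  adequate Nat.lt Lam /\ adequate (fun _ _ : unit => False) Lam.
Proof.
  intros [le [i [Hlcs Hz]]].
  destruct (@inhabited_of_uncountable _ HLam) as [z0].
  destruct HW as [_ [_ [_ [_ [HWu _]]]]].
  destruct (@inhabited_of_uncountable _ HWu) as [w0].
  set (chi := fun (z : Lam) (k : nat) =>
          if excluded_middle_informative (le (Low w0 k) (Top z)) then 1 else 0).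
  assert (Hchi : forall z z', z <> z' -> exists k, chi z k <> chi z' k).
  { intros z xi Hne. apply NNPP. intros Hall.
    assert (Heq : forall k, le (Low w0 k) (Top z) -> le (Low w0 k) (Top xi)).
    { intros k Hk. apply NNPP. intros Hk'. apply Hall. exists k. unfold chi.
      destruct (excluded_middle_informative (le (Low w0 k) (Top z))); [|contradiction].
      destruct (excluded_middle_informative (le (Low w0 k) (Top xi))); [contradiction|].
      discriminate. }
    destruct Hlcs as [_ [_ [Htr [_ [Hstr [H3 H4]]]]]].
    destruct (Hz z) as [Hm1 [_ [_ Hsk]]].
    destruct Hsk as [HlcsZ [_ [O [HO1 [HO2 [HOi HOii]]]]]].
    assert (HneT : @Top W Lam z <> Top xi) by (intros H; injection H; auto).
    destruct (H4 (Top z) (Top xi) I I HneT) as [_ [_ [Ha Hb]]].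
    assert (Hv : forall v, In v (i (Top z) (Top xi)) -> exists n, le v (Mid z n)).
    { intros v Hvin. destruct (Ha v Hvin) as [Hv1 Hv2].
      destruct v as [a k|z' n'|z''].
      - assert (Hsucc : succH (ltHgt ltW) HMid HTop).
        { split; [simpl; auto|]. intros [d [H1 H2]]. destruct d; simpl in *; auto. }
        destruct (HOii HMid HTop (Low a k) (Top z) Hsucc eq_refl eq_refl I)
          as [u [Hu1 [Hu2 Hu3]]].
        { split; [exact Hv1| discriminate]. }
        destruct (HO1 HMid) as [HO1' _]. destruct (HO1' u Hu1) as [Hub Hup].
        destruct u as [| zz n|]; simpl in Hup; try discriminate.
        simpl in Hub. subst zz. exists n. exact Hu2.
      - exfalso.
        assert (z' = z).
        { apply NNPP. intros Hne'. destruct (Hz z') as [_ [Hm2 _]].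
          apply (Hm2 n' z); auto. split; [exact Hv1|discriminate]. }
        assert (z' = xi).
        { apply NNPP. intros Hne'. destruct (Hz z') as [_ [Hm2 _]].
          apply (Hm2 n' xi); auto. split; [exact Hv2|discriminate]. }
        subst. auto.
      - exfalso.
        assert (z'' = z).
        { apply NNPP. intros Hne'. apply (Hstr (Top z'') (Top z) I I).
          split; [exact Hv1|]. intros Heqq; injection Heqq; auto. }
        assert (z'' = xi).
        { apply NNPP. intros Hne'. apply (Hstr (Top z'') (Top xi) I I).
          split; [exact Hv2|]. intros Heqq; injection Heqq; auto. }
        subst. auto. }
    destruct (list_bound _ (fun v n => le v (Mid z n)) Hv) as [N HN].
    assert (Hk : exists k, le (Low w0 k) (Mid z N)).
    { apply NNPP. intros Hnk. apply (H3 (HLow w0) HMid (Mid z N) I I eq_refl).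
      exists []. intros s [_ [Hs1 [Hs2 _]]]. exfalso.
      destruct s as [a k| |]; simpl in Hs1; try discriminate. injection Hs1 as ->.
      apply Hnk. exists k. exact Hs2. }
    destruct Hk as [k Hk].
    assert (HkT : le (Low w0 k) (Top z)).
    { destruct (Hm1 N) as [HmT _]. exact (Htr _ _ _ I I I Hk HmT). }
    destruct (Hb (Low w0 k) I HkT (Heq k HkT)) as [v [Hvin Hkv]].
    destruct (HN v Hvin) as [n [Hn Hvn]].
    assert (Hkn : le (Low w0 k) (Mid z n)) by exact (Htr _ _ _ I I I Hkv Hvn).
    assert (HOm : forall m, O HMid (Mid z m)).
    { intros m. exact (HO2 (Mid z m) (Top z) eq_refl eq_refl (Hm1 m)). }
    assert (Hnil : i (Mid z n) (Mid z N) = []).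
    { apply (HOi HMid); auto. intros H; injection H; lia. }
    destruct HlcsZ as [_ [_ [_ [_ [_ [_ H4Z]]]]]].
    assert (HneM : @Mid W Lam z n <> Mid z N) by (intros H; injection H; lia).
    destruct (H4Z (Mid z n) (Mid z N)) as [_ [_ [_ HbZ]]]; simpl; auto.
    destruct (HbZ (Low w0 k) I Hkn Hk) as [v' [Hv' _]].
    rewrite Hnil in Hv'. exact Hv'. }
  split.
  - exact (gen_adequate omegaF (mkKey chi Hchi) z0).
  - exact (gen_adequate unitF (mkKey chi Hchi) z0).
Qed.
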